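(* Let $R$ be a commutative ring with unit and let $E$ be an $R$-module. Then the quasi-coherent $R$-module $\mathbf{E}$ is an $R$-module scheme (i.e. there exists an $R$-module $V$ such that $\mathbf{E}$ is isomorphic, as a functor of $R$-modules, to $\mathbf{V}^* = \mathbf{Hom}_R(\mathbf{V},\mathbf{R})$) if and only if $E$ is a projective $R$-module of finite type.
   Context: All functors are covariant functors on the category of commutative $R$-algebras. For an $R$-module $E$, $\mathbf{E}$ denotes the functor of $R$-modules $B\mapsto E\otimes_R B$; such functors are called quasi-coherent $R$-modules (and $\mathbf{R}$ is the case $E=R$, i.e. $B\mapsto B$). For functors of $R$-modules $F,H$, $\mathbf{Hom}_R(F,H)$ is the functor of $R$-modules $B\mapsto \mathrm{Hom}_B(F_{|B},H_{|B})$, where $F_{|B}$ is the restriction of $F$ to commutative $B$-algebras and $\mathrm{Hom}_B$ denotes morphisms of functors of $B$-modules. One writes $F^*:=\mathbf{Hom}_R(F,\mathbf{R})$. A functor of the form $\mathbf{V}^*$, with $V$ an $R$-module, is called an $R$-module scheme. *)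

(* Defs.v *)
From HB Require Import structures.
From mathcomp Require Import all_boot all_order all_algebra.
Set Implicit Arguments. Unset Strict Implicit. Unset Printing Implicit Defensive.
Import GRing.Theory.
Local Open Scope ring_scope.

(* A commutative R-algebra is a commutative ring B with a structure morphism
   R -> B (the zero ring is allowed: we use pz = "possibly zero" rings). *)
Record calg (R : comPzRingType) := CAlg {
  calg_ring :> comPzRingType;
  calg_str : {rmorphism R -> calg_ring} }.

Definition calg_hom (R : comPzRingType) (A B : calg R) :=
  { f : {rmorphism A -> B} | forall r, f (calg_str A r) = calg_str B r }.

Definition hom_fun (R : comPzRingType) (A B : calg R) (f : calg_hom A B) : A -> B :=
  fun a => sval f a.
Coercion hom_fun : calg_hom >-> Funclass.

Definition hom_comp (R : comPzRingType) (A B C : calg R)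
  (f : calg_hom A B) (g : calg_hom B C) : calg_hom A C.
Proof.
exists (sval g \o sval f : {rmorphism A -> C}) => r /=.
by rewrite (svalP f) (svalP g).
Defined.

Record modFunctor (R : comPzRingType) := ModFunctor {
  fobj : calg R -> Type;
  fzero : forall B, fobj B;
  fadd : forall B, fobj B -> fobj B -> fobj B;
  fopp : forall B, fobj B -> fobj B;
  fscale : forall B : calg R, B -> fobj B -> fobj B;
  fmap : forall A B : calg R, calg_hom A B -> fobj A -> fobj B }.
Arguments fzero {R} m B : rename.
Arguments fadd {R} m {B} : rename.
Arguments fopp {R} m {B} : rename.
Arguments fscale {R} m {B} : rename.
Arguments fmap {R} m {A B} : rename.

Record is_modFunctor (R : comPzRingType) (F : modFunctor R) : Prop := {
  mf_addA : forall B (x y z : fobj F B), fadd F x (fadd F y z) = fadd F (fadd F x y) z;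
  mf_addC : forall B (x y : fobj F B), fadd F x y = fadd F y x;
  mf_add0 : forall B (x : fobj F B), fadd F (fzero F B) x = x;
  mf_addN : forall B (x : fobj F B), fadd F (fopp F x) x = fzero F B;
  mf_scale1 : forall B (x : fobj F B), fscale F 1 x = x;
  mf_scaleA : forall (B : calg R) (a b : B) (x : fobj F B), fscale F (a * b) x = fscale F a (fscale F b x);
  mf_scaleDr : forall (B : calg R) (a : B) (x y : fobj F B),
      fscale F a (fadd F x y) = fadd F (fscale F a x) (fscale F a y);
  mf_scaleDl : forall (B : calg R) (a b : B) (x : fobj F B),
      fscale F (a + b) x = fadd F (fscale F a x) (fscale F b x);
  mf_mapD : forall A B (f : calg_hom A B) (x y : fobj F A),
      fmap F f (fadd F x y) = fadd F (fmap F f x) (fmap F f y);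
  mf_mapZ : forall A B (f : calg_hom A B) (a : A) (x : fobj F A),
      fmap F f (fscale F a x) = fscale F (f a) (fmap F f x);
  mf_map_id : forall A (f : calg_hom A A), (forall a, f a = a) ->
      forall x, fmap F f x = x;
  mf_map_comp : forall A B C (f : calg_hom A B) (g : calg_hom B C) (h : calg_hom A C),
      (forall a, h a = g (f a)) -> forall x, fmap F h x = fmap F g (fmap F f x) }.

(* [isQC E F]: the functor of R-modules F is (isomorphic to) the quasi-coherent
   module B |-> E (x)_R B.  Precisely: there is a natural R-linear family
   iota_B : E -> F(B) (iota_B e "= e (x) 1") such that F(B) is generated as a
   B-module by the image of iota_B and iota_B is universal among R-linear maps
   from E to B-modules (the universal property of the tensor product).
   Together these say that the induced natural map E (x)_R B -> F(B) is an
   isomorphism of B-modules. *)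
Definition isQC (R : comPzRingType) (E : lmodType R) (F : modFunctor R) : Prop :=
  is_modFunctor F /\
  exists iota : forall B : calg R, E -> fobj F B,
    [/\ (forall B (e e' : E), iota B (e + e') = fadd F (iota B e) (iota B e')),
        (forall B (r : R) (e : E), iota B (r *: e) = fscale F (calg_str B r) (iota B e)),
        (forall A B (f : calg_hom A B) (e : E), fmap F f (iota A e) = iota B e),
        (forall (B : calg R) (x : fobj F B), exists n (b : 'I_n -> B) (e : 'I_n -> E),
            x = \big[fadd F / fzero F B]_(i < n) fscale F (b i) (iota B (e i))) &
        (forall (B : calg R) (M : lmodType B) (g : E -> M),
            (forall e e', g (e + e') = g e + g e') ->
            (forall (r : R) e, g (r *: e) = calg_str B r *: g e) ->
            exists h : fobj F B -> M,
              [/\ forall x y, h (fadd F x y) = h x + h y,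
                  forall (b : B) x, h (fscale F b x) = b *: h x &
                  forall e, h (iota B e) = g e])].

Section Dual.
Variables (R : comPzRingType) (V : modFunctor R).

Definition balg (B : calg R) := { C : calg R & calg_hom B C }.
Definition balg_alg B (X : balg B) : calg R := projT1 X.
Definition balg_str B (X : balg B) : calg_hom B (balg_alg X) := projT2 X.

(* morphisms of functors of B-modules V|_B -> R|_B *)
Definition dual_prop B (th : forall X : balg B, fobj V (balg_alg X) -> balg_alg X) :=
  [/\ forall X x y, th X (fadd V x y) = th X x + th X y,
      forall X (c : balg_alg X) x, th X (fscale V c x) = c * th X x &
      forall (X Y : balg B) (g : calg_hom (balg_alg X) (balg_alg Y)),
        (forall b, g (balg_str X b) = balg_str Y b) ->
        forall x, th Y (fmap V g x) = g (th X x)].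

Definition dual_obj B := { th | @dual_prop B th }.

Definition dual_zero B : dual_obj B.
Proof.
exists (fun X _ => 0); split.
- by move=> *; rewrite addr0.
- by move=> *; rewrite mulr0.
- by move=> X Y g _ x; rewrite /hom_fun rmorph0.
Defined.

Definition dual_add B (t1 t2 : dual_obj B) : dual_obj B.
Proof.
exists (fun X x => sval t1 X x + sval t2 X x).
case: (svalP t1) => a1 l1 n1; case: (svalP t2) => a2 l2 n2; split.
- by move=> X x y; rewrite a1 a2 addrACA.
- by move=> X c x; rewrite l1 l2 mulrDr.
- by move=> X Y g H x; rewrite (n1 _ _ _ H) (n2 _ _ _ H) /hom_fun rmorphD.
Defined.

Definition dual_opp B (t : dual_obj B) : dual_obj B.
Proof.
exists (fun X x => - sval t X x).
case: (svalP t) => a l n; split.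
- by move=> X x y; rewrite a opprD.
- by move=> X c x; rewrite l mulrN.
- by move=> X Y g H x; rewrite (n _ _ _ H) /hom_fun rmorphN.
Defined.

Definition dual_scale (B : calg R) (b : B) (t : dual_obj B) : dual_obj B.
Proof.
exists (fun X x => balg_str X b * sval t X x).
case: (svalP t) => a l n; split.
- by move=> X x y; rewrite a mulrDr.
- by move=> X c x; rewrite l mulrCA.
- by move=> X Y g H x; rewrite (n _ _ _ H) /hom_fun rmorphM; congr (_ * _); have := H b; rewrite /hom_fun => ->.
Defined.

Definition balg_pull A B (f : calg_hom A B) (X : balg B) : balg A :=
  existT _ (balg_alg X) (hom_comp f (balg_str X)).

Definition dual_map A B (f : calg_hom A B) (t : dual_obj A) : dual_obj B.
Proof.
exists (fun X x => sval t (balg_pull f X) x).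
case: (svalP t) => a l n; split.
- by move=> X x y; rewrite a.
- by move=> X c x; rewrite l.
- move=> X Y g H x; apply: (n (balg_pull f X) (balg_pull f Y) g) => c /=.
  exact: (H (f c)).
Defined.

Definition dual : modFunctor R :=
  @ModFunctor R dual_obj dual_zero dual_add dual_opp dual_scale dual_map.

End Dual.

Definition finite_type (R : pzRingType) (E : lmodType R) : Prop :=
  exists n (v : 'I_n -> E), forall e : E, exists c : 'I_n -> R,
    e = \sum_(i < n) c i *: v i.

Definition projective (R : pzRingType) (E : lmodType R) : Prop :=
  forall (M N : lmodType R) (p : {linear M -> N}) (f : {linear E -> N}),
    (forall y, exists x, p x = y) ->
    exists g : {linear E -> M}, forall e, p (g e) = f e.

(* Main.v *)
Require Import Defs.
From HB Require Import structures.
From mathcomp Require Import all_boot all_order all_algebra.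
From Stdlib Require Import FunctionalExtensionality ProofIrrelevance IndefiniteDescription.
Set Implicit Arguments. Unset Strict Implicit. Unset Printing Implicit Defensive.
Import GRing.Theory.
Local Open Scope ring_scope.

Section Gen.
Variable R : comPzRingType.

Definition idhom (B : calg R) : calg_hom B B :=
  exist _ (idfun : {rmorphism B -> B}) (fun r => erefl).
Definition Rc : calg R := @CAlg R R idfun.
Definition triv (B : calg R) : balg B := existT _ B (idhom B).
Definition strhom (B : calg R) : calg_hom Rc B :=
  exist _ (calg_str B) (fun r => erefl).

Lemma dual_ext (V : modFunctor R) B (t1 t2 : dual_obj V B) :
  (forall X x, sval t1 X x = sval t2 X x) -> t1 = t2.
Proof.
case: t1 t2 => [f1 p1] [f2 p2] /= H.
have E : f1 = f2.
  by apply: functional_extensionality_dep => X; apply: functional_extensionality => x.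
subst; f_equal; apply: proof_irrelevance.
Qed.

Section MF.
Variables (F : modFunctor R) (HF : is_modFunctor F).

Lemma fadd0 B (x : fobj F B) : fadd F x (fzero F B) = x.
Proof. by rewrite (mf_addC HF) (mf_add0 HF). Qed.

Lemma fadd_idem B (y : fobj F B) : y = fadd F y y -> y = fzero F B.
Proof.
move=> H.
have := mf_addN HF y; rewrite {2}H (mf_addA HF) (mf_addN HF) (mf_add0 HF).
by move=> ->.
Qed.

Lemma fmap0 A B (f : calg_hom A B) : fmap F f (fzero F A) = fzero F B.
Proof.
apply: fadd_idem; rewrite -(mf_mapD HF); congr (fmap F f _).
by rewrite (mf_add0 HF).
Qed.

Lemma fmap_big A B (f : calg_hom A B) n (G : 'I_n -> fobj F A) :
  fmap F f (\big[fadd F/fzero F A]_(i < n) G i) =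
  \big[fadd F/fzero F B]_(i < n) fmap F f (G i).
Proof.
apply: (big_morph (fmap F f)); [exact: (mf_mapD HF) | exact: fmap0].
Qed.

Lemma h_big B (M : zmodType) (h : fobj F B -> M) :
  (forall x y, h (fadd F x y) = h x + h y) ->
  forall n (G : 'I_n -> fobj F B),
  h (\big[fadd F/fzero F B]_(i < n) G i) = \sum_(i < n) h (G i).
Proof.
move=> hD n G; apply: (big_morph h) => //.
apply: (@addrI _ (h (fzero F B))); rewrite -hD (mf_add0 HF) addr0.
by [].
Qed.

End MF.
End Gen.
Section Sqz.
Variables (R : comPzRingType) (V : lmodType R).
Definition sqz := (R * V)%type.
HB.instance Definition _ := GRing.Zmodule.on sqz.
Definition sqmul (x y : sqz) : sqz := (x.1 * y.1, x.1 *: y.2 + y.1 *: x.2).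
Definition sqone : sqz := (1, 0).
Lemma sqmulA : associative sqmul.
Proof.
move=> [a u] [b v] [c w]; rewrite /sqmul /=; congr (_, _); first by rewrite mulrA.
by rewrite !scalerDr !scalerA addrA [c * a]mulrC [c * b]mulrC.
Qed.
Lemma sqmulC : commutative sqmul.
Proof. by move=> [a u] [b v]; rewrite /sqmul /= mulrC addrC. Qed.
Lemma sqmul1 : left_id sqone sqmul.
Proof. by move=> [a u]; rewrite /sqmul /= mul1r scale1r scaler0 addr0. Qed.
Lemma sqmulDl : left_distributive sqmul +%R.
Proof.
move=> [a u] [b v] [c w]; rewrite /sqmul /=; congr (_, _); first by rewrite mulrDl.
by rewrite scalerDl scalerDr addrACA.
Qed.
HB.instance Definition _ := GRing.Zmodule_isComPzRing.Build sqz sqmulA sqmulC sqmul1 sqmulDl.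
Definition sqin (r : R) : sqz := (r, 0).
Lemma sqin_add : zmod_morphism sqin.
Proof. by move=> a b; rewrite /sqin; congr (_, _); rewrite subrr. Qed.
Lemma sqin_mul : monoid_morphism sqin.
Proof. split=> // a b; rewrite /sqin /=; rewrite /GRing.mul /= /sqmul /=.
 by rewrite !scaler0 addr0. Qed.
HB.instance Definition _ := GRing.isZmodMorphism.Build R sqz sqin sqin_add.
HB.instance Definition _ := GRing.isMonoidMorphism.Build R sqz sqin sqin_mul.
Definition Sc : calg R := @CAlg R sqz sqin.
Lemma sqmulE (x y : sqz) : x * y = (x.1 * y.1, x.1 *: y.2 + y.1 *: x.2).
Proof. by []. Qed.
End Sqz.
Definition mkLin (R : pzRingType) (U W : lmodType R) (f : U -> W) (H : linear f) : {linear U -> W} :=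
  HB.pack f (GRing.isLinear.Build _ _ _ _ f H).

Lemma split_proj (R : comPzRingType) (E : lmodType R) n (ei : 'I_n -> E) (psi : 'I_n -> E -> R) :
  (forall i a x y, psi i (a *: x + y) = a * psi i x + psi i y) ->
  (forall e, e = \sum_(i < n) psi i e *: ei i) ->
  projective E /\ finite_type E.
Proof.
move=> psiL dec; split; last by exists n, ei => e; exists (psi^~ e).
move=> M N p f surj.
pose x i := proj1_sig (constructive_indefinite_description _ (surj (f (ei i)))).
have px i : p (x i) = f (ei i) by rewrite /x; case: constructive_indefinite_description.
pose g e := \sum_(i < n) psi i e *: x i.
have gL : linear g.
  move=> a u v; rewrite /g scaler_sumr -big_split /=; apply: eq_bigr => i _.
  by rewrite psiL scalerDl scalerA.
exists (mkLin gL) => e /=.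
rewrite /g linear_sum {2}(dec e) linear_sum; apply: eq_bigr => i _.
by rewrite linearZ px linearZ.
Qed.

Lemma homD (R : comPzRingType) (A B : calg R) (f : calg_hom A B) a b : f (a + b) = f a + f b.
Proof. exact: rmorphD. Qed.
Lemma homM (R : comPzRingType) (A B : calg R) (f : calg_hom A B) a b : f (a * b) = f a * f b.
Proof. exact: rmorphM. Qed.
Lemma homstr (R : comPzRingType) (A B : calg R) (f : calg_hom A B) r : f (calg_str A r) = calg_str B r.
Proof. exact: (svalP f r). Qed.
Lemma hom_sum (R : comPzRingType) (A B : calg R) (f : calg_hom A B) n (G : 'I_n -> A) :
  f (\sum_(i < n) G i) = \sum_(i < n) f (G i).
Proof. exact: rmorph_sum. Qed.
Lemma snd_sum (R : comPzRingType) (V : lmodType R) n (G : 'I_n -> calg_ring (Sc V)) :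
  ((\sum_(i < n) G i : calg_ring (Sc V)) : sqz V).2 = \sum_(i < n) (G i : sqz V).2.
Proof. by apply: (big_morph (fun x : sqz V => x.2)). Qed.

Lemma hom1 (R : comPzRingType) (A B : calg R) (f : calg_hom A B) : f 1 = 1.
Proof. exact: rmorph1. Qed.

Lemma dual_pw (R : comPzRingType) (V : modFunctor R) (HV : is_modFunctor V) B
  (t : dual_obj V B) (C : calg R) (s1 s2 : calg_hom B C) :
  (forall b, s1 b = s2 b) ->
  forall x, sval t (existT _ C s1) x = sval t (existT _ C s2) x.
Proof.
move=> H x.
case: (svalP t) => _ _ N.
have := N (existT _ C s1) (existT _ C s2) (idhom C) H x.
by rewrite (mf_map_id HV).
Qed.

Lemma dual_is_mf (R : comPzRingType) (V : modFunctor R) :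
  is_modFunctor V -> is_modFunctor (dual V).
Proof.
move=> HV; split.
- by move=> B x y z; apply: dual_ext => X v /=; rewrite addrA.
- by move=> B x y; apply: dual_ext => X v /=; rewrite addrC.
- by move=> B x; apply: dual_ext => X v /=; rewrite add0r.
- by move=> B x; apply: dual_ext => X v /=; rewrite addNr.
- by move=> B x; apply: dual_ext => X v /=; rewrite hom1 mul1r.
- by move=> B a b x; apply: dual_ext => X v /=; rewrite homM mulrA.
- by move=> B a x y; apply: dual_ext => X v /=; rewrite mulrDr.
- by move=> B a b x; apply: dual_ext => X v /=; rewrite homD mulrDl.
- by move=> A B f x y; apply: dual_ext.
- by move=> A B f a x; apply: dual_ext.
- move=> A f H x; apply: dual_ext => -[C s] v /=.
  by apply: dual_pw => // b /=; transitivity (s (f b)); [by [] | rewrite H].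
- move=> A B C f g h H x; apply: dual_ext => -[D s] v /=.
  by apply: dual_pw => // b /=; transitivity (s (h b)); [by [] | rewrite H].
Qed.

Section Vsub.
Variables (R : comPzRingType) (n : nat) (A : 'M[R]_n).
Definition Vpred : pred 'rV[R]_n := fun x => x *m A == x.
Record Vt := VT { vval : 'rV[R]_n; vvalP : Vpred vval }.
HB.instance Definition _ := [isSub for vval].
HB.instance Definition _ := [Choice of Vt by <:].
Lemma Vpred_closed : subsemimod_closed Vpred.
Proof.
split; first split.
- by rewrite unfold_in /Vpred mul0mx.
- by move=> x y; rewrite !unfold_in /Vpred mulmxDl => /eqP -> /eqP ->.
- by move=> a x; rewrite !unfold_in /Vpred -scalemxAl => /eqP ->.
Qed.
HB.instance Definition _ := GRing.SubChoice_isSubLmodule.Build R 'rV[R]_n Vpred Vt Vpred_closed.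
Lemma vvalD (x y : Vt) : vval (x + y) = vval x + vval y.
Proof. exact: (raddfD (val : Vt -> 'rV[R]_n) x y). Qed.
Lemma vvalZ a (x : Vt) : vval (a *: x) = a *: vval x.
Proof. exact: (linearZZ (val : Vt -> 'rV[R]_n) a x). Qed.
End Vsub.

Section Bwd.
Variables (R : comPzRingType) (E : lmodType R) (n : nat) (ei : 'I_n -> E) (psi : 'I_n -> E -> R).
Hypothesis psiL : forall i a x y, psi i (a *: x + y) = a * psi i x + psi i y.
Hypothesis dec : forall e, e = \sum_(i < n) psi i e *: ei i.

Lemma psi0 i : psi i 0 = 0.
Proof.
have H := psiL i 1 0 0; rewrite scaler0 addr0 mul1r in H.
by apply: (@addrI _ (psi i 0)); rewrite addr0 -H.
Qed.
Lemma psiD i x y : psi i (x + y) = psi i x + psi i y.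
Proof. by have := psiL i 1 x y; rewrite scale1r mul1r. Qed.
Lemma psiZ i a x : psi i (a *: x) = a * psi i x.
Proof. by rewrite -(addr0 (a *: x)) psiL psi0 addr0. Qed.
Lemma psi_sum i m (c : 'I_m -> R) (x : 'I_m -> E) :
  psi i (\sum_(j < m) c j *: x j) = \sum_(j < m) c j * psi i (x j).
Proof.
rewrite (big_morph (psi i) (psiD i) (psi0 i)); apply: eq_bigr => j _.
by rewrite psiZ.
Qed.

Definition A : 'M[R]_n := \matrix_(i, j) psi i (ei j).
Lemma AA : A *m A = A.
Proof.
apply/matrixP => i k; rewrite !mxE.
rewrite [in RHS](dec (ei k)) psi_sum; apply: eq_bigr => j _.
by rewrite !mxE mulrC.
Qed.

Definition V := Vt A.
Lemma wP i : Vpred A (row i A).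
Proof. by rewrite /Vpred -row_mul AA. Qed.
Definition w i : V := VT (wP i).

Definition AB (B : calg R) : 'M[B]_n := map_mx (calg_str B) A.
Definition VbT (B : calg R) := {x : 'rV[B]_n | x *m AB B == x}.

Lemma vbext B (x y : VbT B) : sval x = sval y -> x = y.
Proof.
case: x y => [x px] [y py] /= H; subst; f_equal; exact: eq_irrelevance.
Qed.

Lemma ABmap (B C : calg R) (f : calg_hom B C) : map_mx (sval f) (AB B) = AB C.
Proof. by apply/matrixP => i j; rewrite !mxE; exact: (homstr f). Qed.

Definition mkVb (B : calg R) (z : 'rV[B]_n) (p : z *m AB B == z) : VbT B :=
  exist (fun z => z *m AB B == z) z p.
Definition vb0 B : VbT B := mkVb (introT eqP (mul0mx _ (AB B))).
Lemma vbaddP B (x y : VbT B) : (sval x + sval y) *m AB B == sval x + sval y.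
Proof. by rewrite mulmxDl (eqP (svalP x)) (eqP (svalP y)). Qed.
Definition vbadd B (x y : VbT B) : VbT B := mkVb (vbaddP x y).
Lemma vboppP B (x : VbT B) : (- sval x) *m AB B == - sval x.
Proof. by rewrite mulNmx (eqP (svalP x)). Qed.
Definition vbopp B (x : VbT B) : VbT B := mkVb (vboppP x).
Lemma vbscaleP (B : calg R) (c : B) (x : VbT B) : (c *: sval x) *m AB B == c *: sval x.
Proof. by rewrite -scalemxAl (eqP (svalP x)). Qed.
Definition vbscale (B : calg R) (c : B) (x : VbT B) : VbT B := mkVb (vbscaleP c x).
Lemma vbmapP B C (f : calg_hom B C) (x : VbT B) :
  map_mx (sval f) (sval x) *m AB C == map_mx (sval f) (sval x).
Proof. case: x => z /= /eqP Hz; by rewrite -(ABmap f) -map_mxM Hz. Qed.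
Definition vbmap B C (f : calg_hom B C) (x : VbT B) : VbT C := mkVb (vbmapP f x).

Definition Vb : modFunctor R := @ModFunctor R VbT vb0 vbadd vbopp vbscale vbmap.

Lemma Vb_mf : is_modFunctor Vb.
Proof.
split.
- by move=> B x y z; apply: vbext => /=; rewrite addrA.
- by move=> B x y; apply: vbext => /=; rewrite addrC.
- by move=> B x; apply: vbext => /=; rewrite add0r.
- by move=> B x; apply: vbext => /=; rewrite addNr.
- by move=> B x; apply: vbext => /=; rewrite scale1r.
- by move=> B a b x; apply: vbext => /=; rewrite scalerA.
- by move=> B a x y; apply: vbext => /=; rewrite scalerDr.
- by move=> B a b x; apply: vbext => /=; rewrite scalerDl.
- by move=> B C f x y; apply: vbext => /=; rewrite map_mxD.
- by move=> B C f a x; apply: vbext => /=; rewrite map_mxZ.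
- move=> B f H x; apply: vbext => /=; apply/matrixP => i j; rewrite mxE.
  exact: H.
- move=> B C D f g h H x; apply: vbext => /=; apply/matrixP => i j; rewrite !mxE.
  exact: H.
Qed.

Lemma iVP (B : calg R) (v : V) :
  map_mx (calg_str B) (vval v) *m AB B == map_mx (calg_str B) (vval v).
Proof. case: v => z; rewrite /Vpred /= => /eqP Hz; by rewrite /AB -map_mxM Hz. Qed.
Definition iV (B : calg R) (v : V) : VbT B := mkVb (iVP B v).
Arguments iV : clear implicits.

Lemma sval_big B m (G : 'I_m -> VbT B) :
  sval (\big[vbadd (B:=B)/vb0 B]_(i < m) G i) = \sum_(i < m) sval (G i).
Proof. by apply: (big_morph (fun x : VbT B => sval x)). Qed.

Lemma Vb_gen B (x : VbT B) :
  x = \big[vbadd (B:=B)/vb0 B]_(i < n) vbscale (sval x 0 i) (iV B (w i)).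
Proof.
apply: vbext; rewrite sval_big /=.
rewrite -{1}(eqP (svalP x)) mulmx_sum_row; apply: eq_bigr => i _.
by rewrite /AB map_row.
Qed.

Lemma vsum_w (v : V) : v = \sum_(i < n) vval v 0 i *: w i.
Proof.
apply: val_inj; rewrite (raddf_sum (val : V -> 'rV[R]_n)) /=.
transitivity (vval v *m A); first by rewrite (eqP (vvalP v)).
rewrite mulmx_sum_row; apply: eq_bigr => i _.
by [].
Qed.

Lemma isQC_V : isQC V Vb.
Proof.
split; first exact: Vb_mf.
exists iV; split.
- by move=> B e e'; apply: vbext => /=; rewrite map_mxD.
- by move=> B r e; apply: vbext => /=; rewrite map_mxZ.
- move=> B C f e; apply: vbext => /=; apply/matrixP => i j; rewrite !mxE.
  exact: (homstr f).
- move=> B x; exists n, (fun i => sval x 0 i), w; exact: Vb_gen.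
- move=> B M g gD gZ.
  have g0 : g 0 = 0.
    by apply: (@addrI _ (g 0)); rewrite -gD !addr0.
  have gsum : forall m (G : 'I_m -> V), g (\sum_(i < m) G i) = \sum_(i < m) g (G i).
    by move=> m G; apply: (big_morph g gD g0).
  exists (fun x : VbT B => \sum_(i < n) sval x 0 i *: g (w i)); split.
  + move=> x y /=; rewrite -big_split /=; apply: eq_bigr => i _.
    by rewrite mxE scalerDl.
  + move=> b x /=; rewrite scaler_sumr; apply: eq_bigr => i _.
    by rewrite mxE scalerA.
  + move=> e /=; rewrite {2}(vsum_w e) gsum; apply: eq_bigr => i _.
    by rewrite gZ mxE.
Qed.

Lemma iVN (B C : calg R) (f : calg_hom B C) (v : V) : vbmap f (iV B v) = iV C v.
Proof.
apply: vbext => /=; apply/matrixP => i j; rewrite !mxE.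
exact: (homstr f).
Qed.

Definition iEf (B : calg R) (e : E) (X : balg B) (x : VbT (balg_alg X)) : balg_alg X :=
  \sum_(j < n) sval x 0 j * calg_str (balg_alg X) (psi j e).
Arguments iEf : clear implicits.

Lemma iEprop B e : dual_prop (V := Vb) (iEf B e).
Proof.
split.
- move=> X x y; rewrite /iEf -big_split /=; apply: eq_bigr => j _.
  by rewrite mxE mulrDl.
- move=> X c x; rewrite /iEf mulr_sumr /=; apply: eq_bigr => j _.
  by rewrite mxE mulrA.
- move=> X Y g H x; rewrite /iEf hom_sum /=; apply: eq_bigr => j _.
  by rewrite mxE homM homstr.
Qed.

Definition iE (B : calg R) (e : E) : dual_obj Vb B := exist _ (iEf B e) (iEprop B e).

Lemma iE_w B e i : sval (iE B e) (triv B) (iV B (w i)) = calg_str B (psi i e).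
Proof.
rewrite /= /iEf.
transitivity (calg_str B (\sum_(j < n) psi i (ei j) * psi j e)).
  rewrite rmorph_sum; apply: eq_bigr => j _.
  by rewrite !mxE rmorphM.
congr (calg_str B _).
rewrite [in RHS](dec e) psi_sum; apply: eq_bigr => j _.
by rewrite mulrC.
Qed.

Lemma dbig B m (G : 'I_m -> dual_obj Vb B) X x :
  sval (\big[dual_add (V:=Vb) (B:=B)/dual_zero Vb B]_(i < m) G i) X x = \sum_(i < m) sval (G i) X x.
Proof. by apply: (big_morph (fun t => sval t X x)). Qed.

Lemma tbig B (t : dual_obj Vb B) X m (G : 'I_m -> VbT (balg_alg X)) :
  sval t X (\big[vbadd (B:=balg_alg X)/vb0 _]_(i < m) G i) = \sum_(i < m) sval t X (G i).
Proof.
case: (svalP t) => tD _ _.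
exact: (h_big Vb_mf (fun x y => tD X x y)).
Qed.

Lemma isQC_E : isQC E (dual Vb).
Proof.
split; first exact: (dual_is_mf Vb_mf).
exists iE; split.
- move=> B e e'; apply: dual_ext => X x /=; rewrite /iEf -big_split /=.
  by apply: eq_bigr => j _; rewrite psiD rmorphD mulrDr.
- move=> B r e; apply: dual_ext => X x /=; rewrite /iEf mulr_sumr /=.
  apply: eq_bigr => j _; rewrite psiZ homstr rmorphM mulrCA.
  by [].
- by move=> B C f e; apply: dual_ext.
- move=> B t.
  exists n, (fun i => sval t (triv B) (iV B (w i))), ei.
  apply: dual_ext => X x.
  rewrite dbig.
  case: (svalP t) => _ tZ tN.
  have tiV : forall j, sval t X (iV (balg_alg X) (w j)) =
                       balg_str X (sval t (triv B) (iV B (w j))).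
    move=> j; rewrite -(iVN (balg_str X)).
    exact: (tN (triv B) X (balg_str X) (fun b => erefl)).
  have hx : forall k, sval x 0 k =
      \sum_(j < n) sval x 0 j * calg_str (balg_alg X) (psi j (ei k)).
    move=> k; rewrite -{1}(eqP (svalP x)) mxE; apply: eq_bigr => j _.
    by rewrite !mxE.
  rewrite [in LHS](Vb_gen x) tbig; apply: eq_bigr => k _.
  rewrite tZ tiV /= hx mulrC.
  by [].
- move=> B M g gD gZ.
  have g0 : g 0 = 0.
    by apply: (@addrI _ (g 0)); rewrite -gD !addr0.
  have gsum : forall m (G : 'I_m -> E), g (\sum_(i < m) G i) = \sum_(i < m) g (G i).
    by move=> m G; apply: (big_morph g gD g0).
  exists (fun t : dual_obj Vb B => \sum_(i < n) sval t (triv B) (iV B (w i)) *: g (ei i)).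
  split.
  + move=> x y /=; rewrite -big_split /=; apply: eq_bigr => i _.
    by rewrite scalerDl.
  + move=> b x /=; rewrite scaler_sumr; apply: eq_bigr => i _.
    by rewrite scalerA.
  + move=> e; rewrite [in RHS](dec e) gsum; apply: eq_bigr => i _.
    by rewrite iE_w gZ.
Qed.

End Bwd.

Section Fwd.
Variables (R : comPzRingType) (E V : lmodType R) (Vb : modFunctor R).
Variable HVb : is_modFunctor Vb.
Variable iV : forall B : calg R, V -> fobj Vb B.
Hypothesis iVD : forall B (e e' : V), iV B (e + e') = fadd Vb (iV B e) (iV B e').
Hypothesis iVZ : forall B (r : R) (e : V), iV B (r *: e) = fscale Vb (calg_str B r) (iV B e).
Hypothesis iVN : forall A B (f : calg_hom A B) (e : V), fmap Vb f (iV A e) = iV B e.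
Hypothesis iVgen : forall (B : calg R) (x : fobj Vb B), exists n (b : 'I_n -> B) (e : 'I_n -> V),
            x = \big[fadd Vb / fzero Vb B]_(i < n) fscale Vb (b i) (iV B (e i)).
Hypothesis iVuniv : forall (B : calg R) (M : lmodType B) (g : V -> M),
            (forall e e', g (e + e') = g e + g e') ->
            (forall (r : R) e, g (r *: e) = calg_str B r *: g e) ->
            exists h : fobj Vb B -> M,
              [/\ forall x y, h (fadd Vb x y) = h x + h y,
                  forall (b : B) x, h (fscale Vb b x) = b *: h x &
                  forall e, h (iV B e) = g e].
Variable HD : is_modFunctor (dual Vb).
Variable iE : forall B : calg R, E -> fobj (dual Vb) B.
Hypothesis iED : forall B (e e' : E), iE B (e + e') = fadd (dual Vb) (iE B e) (iE B e').
Hypothesis iEZ : forall B (r : R) (e : E), iE B (r *: e) = fscale (dual Vb) (calg_str B r) (iE B e).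
Hypothesis iEN : forall A B (f : calg_hom A B) (e : E), fmap (dual Vb) f (iE A e) = iE B e.
Hypothesis iEgen : forall (B : calg R) (x : fobj (dual Vb) B), exists n (b : 'I_n -> B) (e : 'I_n -> E),
            x = \big[fadd (dual Vb) / fzero (dual Vb) B]_(i < n) fscale (dual Vb) (b i) (iE B (e i)).
Hypothesis iEuniv : forall (B : calg R) (M : lmodType B) (g : E -> M),
            (forall e e', g (e + e') = g e + g e') ->
            (forall (r : R) e, g (r *: e) = calg_str B r *: g e) ->
            exists h : fobj (dual Vb) B -> M,
              [/\ forall x y, h (fadd (dual Vb) x y) = h x + h y,
                  forall (b : B) x, h (fscale (dual Vb) b x) = b *: h x &
                  forall e, h (iE B e) = g e].

Lemma tD B (t : dual_obj Vb B) X x y : sval t X (fadd Vb x y) = sval t X x + sval t X y.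
Proof. by case: (svalP t) => a _ _; apply: a. Qed.
Lemma tZ B (t : dual_obj Vb B) X c x : sval t X (fscale Vb c x) = c * sval t X x.
Proof. by case: (svalP t) => _ a _; apply: a. Qed.
Lemma tN B (t : dual_obj Vb B) (X Y : balg B) (g : calg_hom (balg_alg X) (balg_alg Y)) :
  (forall b, g (balg_str X b) = balg_str Y b) -> forall x, sval t Y (fmap Vb g x) = g (sval t X x).
Proof. by case: (svalP t) => _ _ a; apply: a. Qed.

Lemma t_big B (t : dual_obj Vb B) X n (G : 'I_n -> fobj Vb (balg_alg X)) :
  sval t X (\big[fadd Vb/fzero Vb _]_(i < n) G i) = \sum_(i < n) sval t X (G i).
Proof. exact: (h_big HVb (fun x y => tD t x y)). Qed.

Lemma dual_iV B (t : dual_obj Vb B) X v :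
  sval t X (iV (balg_alg X) v) = balg_str X (sval t (triv B) (iV B v)).
Proof.
have H := @tN B t (triv B) X (balg_str X) (fun b => erefl) (iV B v).
by rewrite iVN in H.
Qed.

Lemma dual_eqV B (t1 t2 : dual_obj Vb B) :
  (forall v, sval t1 (triv B) (iV B v) = sval t2 (triv B) (iV B v)) -> t1 = t2.
Proof.
move=> H; apply: dual_ext => X x.
have [n [b [e ->]]] := iVgen x.
rewrite t_big t_big; apply: eq_bigr => i _.
by rewrite tZ tZ (dual_iV t1) (dual_iV t2) H.
Qed.

Lemma dual_big_sval B n (G : 'I_n -> dual_obj Vb B) X x :
  sval (\big[fadd (dual Vb)/fzero (dual Vb) B]_(i < n) G i) X x = \sum_(i < n) sval (G i) X x.
Proof. by apply: (big_morph (fun t => sval t X x)). Qed.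

Definition phi (e : E) (v : V) : R := sval (iE (Rc R) e) (triv (Rc R)) (iV (Rc R) v).

Lemma phiDe e e' v : phi (e + e') v = phi e v + phi e' v.
Proof. by rewrite /phi iED. Qed.
Lemma phiZe r e v : phi (r *: e) v = r * phi e v.
Proof. by rewrite /phi iEZ. Qed.
Lemma phiDv e v v' : phi e (v + v') = phi e v + phi e v'.
Proof. by rewrite /phi iVD tD. Qed.
Lemma phiZv e r v : phi e (r *: v) = r * phi e v.
Proof. by rewrite /phi iVZ tZ. Qed.
Lemma phi0v e : phi e 0 = 0.
Proof. by rewrite -(scale0r (0 : V)) phiZv mul0r. Qed.
Lemma phi_sum e n (c : 'I_n -> R) (w : 'I_n -> V) :
  phi e (\sum_(i < n) c i *: w i) = \sum_(i < n) c i * phi e (w i).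
Proof.
rewrite (big_morph (phi e) (phiDv e) (phi0v e)); apply: eq_bigr => i _.
by rewrite phiZv.
Qed.

Definition gX (X : balg (Sc V)) (v : V) : balg_alg X :=
  balg_str X ((0 : R, v) : sqz V).

Lemma gXD X v v' : gX X (v + v') = gX X v + gX X v'.
Proof.
rewrite /gX -homD; congr (balg_str X _).
by rewrite -[RHS]/(((0:R) + 0, v + v') : sqz V) addr0.
Qed.

Lemma gXZ X r v : gX X (r *: v) = calg_str (balg_alg X) r * gX X v.
Proof.
rewrite /gX -(homstr (balg_str X)) -homM; congr (balg_str X _).
by rewrite sqmulE /= mulr0 scaler0 addr0.
Qed.

Definition thf (X : balg (Sc V)) : fobj Vb (balg_alg X) -> balg_alg X :=
  proj1_sig (constructive_indefinite_description _
     (@iVuniv (balg_alg X) (calg_ring (balg_alg X))^o (gX X) (gXD X) (gXZ X))).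
Arguments thf : clear implicits.

Lemma thfD X x y : thf X (fadd Vb x y) = thf X x + thf X y.
Proof. by rewrite /thf; case: constructive_indefinite_description => h [a b c]; apply: a. Qed.
Lemma thfZ X c x : thf X (fscale Vb c x) = c * thf X x.
Proof. by rewrite /thf; case: constructive_indefinite_description => h [a b d]; apply: b. Qed.
Lemma thfi X v : thf X (iV _ v) = gX X v.
Proof. by rewrite /thf; case: constructive_indefinite_description => h [a b d]; apply: d. Qed.

Arguments thfD : clear implicits.
Arguments thfZ : clear implicits.
Arguments thfi : clear implicits.

Lemma thf_big X n (G : 'I_n -> fobj Vb (balg_alg X)) :
  thf X (\big[fadd Vb/fzero Vb _]_(i < n) G i) = \sum_(i < n) thf X (G i).
Proof. exact: (h_big HVb (fun x y => thfD X x y)). Qed.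

Lemma thfN (X Y : balg (Sc V)) (g : calg_hom (balg_alg X) (balg_alg Y)) :
  (forall b, g (balg_str X b) = balg_str Y b) -> forall x, thf Y (fmap Vb g x) = g (thf X x).
Proof.
move=> H x; have [n [b [e ->]]] := iVgen x.
rewrite (fmap_big HVb) thf_big thf_big hom_sum; apply: eq_bigr => i _.
by rewrite (mf_mapZ HVb) iVN (thfZ Y) (thfZ X) (thfi Y) (thfi X) homM /gX H.
Qed.

Definition th : dual_obj Vb (Sc V) :=
  exist _ thf (And3 (fun X x y => thfD X x y) (fun X c x => thfZ X c x)
                    (fun X Y g H x => thfN H x)).

Lemma iE_Sc e v : sval (iE (Sc V) e) (triv (Sc V)) (iV (Sc V) v) = sqin V (phi e v).
Proof.
rewrite -(iEN (strhom (Sc V)) e).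
exact: (dual_iV (iE (Rc R) e) (balg_pull (strhom (Sc V)) (triv (Sc V))) v).
Qed.

Lemma Vdec : exists n (b : 'I_n -> sqz V) (e : 'I_n -> E),
  forall v, v = \sum_(i < n) phi (e i) v *: (b i).2.
Proof.
have [n [b [e Heq]]] := iEgen th.
exists n, b, e => v.
move: (congr1 (fun t : dual_obj Vb (Sc V) => sval t (triv _) (iV _ v)) Heq) => /=.
rewrite (thfi (triv _)) dual_big_sval => H.
transitivity ((gX (triv (Sc V)) v : sqz V).2); first by [].
rewrite H snd_sum; apply: eq_bigr => i _ /=.
by rewrite iE_Sc /= scaler0 add0r.
Qed.

Lemma fwd_main : projective E /\ finite_type E.
Proof.
have [n [b [e Hv]]] := Vdec.
pose w i := (b i).2.
apply: (@split_proj R E n e (fun i x => phi x (w i))).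
  by move=> i a x y; rewrite phiDe phiZe.
move=> x.
have [h [hD hZ hi]] := @iEuniv (Rc R) E idfun (fun _ _ => erefl) (fun _ _ => erefl).
have Hx : iE (Rc R) x = \big[fadd (dual Vb)/fzero (dual Vb) (Rc R)]_(i < n)
                          fscale (dual Vb) (B := Rc R) (phi x (w i)) (iE (Rc R) (e i)).
  apply: dual_eqV => v; rewrite dual_big_sval /=.
  transitivity (phi x v); first by [].
  rewrite {1}(Hv v) phi_sum; apply: eq_bigr => i _.
  by rewrite mulrC.
transitivity (h (iE (Rc R) x)); first by rewrite hi.
rewrite Hx (h_big HD hD); apply: eq_bigr => i _.
by rewrite hZ hi.
Qed.

End Fwd.

Unset Implicit Arguments.

Theorem mainTheorem1 (R : comPzRingType) (E : lmodType R) :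
  (exists (V : lmodType R) (Vb : modFunctor R), isQC V Vb /\ isQC E (dual Vb))
  <-> (projective E /\ finite_type E).
Proof.
split.
- move=> [V [Vb [[HVb [iV [iVD iVZ iVN iVgen iVuniv]]] [HD [iE [iED iEZ iEN iEgen iEuniv]]]]]].
  exact: (fwd_main HVb iVD iVZ iVN iVgen iVuniv HD iED iEZ iEN iEgen iEuniv).
- move=> [Hp [n [v Hv]]].
  pose pf (c : 'rV[R]_n) := \sum_(i < n) c 0 i *: v i.
  have pL : linear pf.
    move=> a c d; rewrite /pf scaler_sumr -big_split /=; apply: eq_bigr => i _.
    by rewrite !mxE scalerDl scalerA.
  have surj : forall y : E, exists x, mkLin pL x = y.
    move=> y; have [c Hc] := Hv y; exists (\row_i c i).
    by rewrite Hc /= /pf; apply: eq_bigr => i _; rewrite mxE.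
  have [g Hg] := Hp _ _ (mkLin pL) (idfun : {linear E -> E}) surj.
  pose psi i e := g e 0 i.
  have psiL : forall i a x y, psi i (a *: x + y) = a * psi i x + psi i y.
    by move=> i a x y; rewrite /psi linearP !mxE.
  have dec : forall e, e = \sum_(i < n) psi i e *: v i.
    by move=> e; rewrite -[e in LHS](Hg e).
  exists (Vt (A v psi)), (Vb v psi); split.
    exact: (isQC_V psiL dec).
  exact: (isQC_E psiL dec).
Qed.
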